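(* For $a\in\mathbb R\setminus\{0,1\}$, let $\mathfrak g_a$ be the $7$-dimensional nilpotent Lie algebra with basis $\{e_1,\dots,e_7\}$ and dual basis $\{e^1,\dots,e^7\}$ satisfying $$de^1=de^2=0,\ de^3=(1-a)e^{12},\ de^4=e^{13},\ de^5=ae^{14}+e^{23},\ de^6=e^{15}+e^{24},\ de^7=e^{16}+e^{25}+e^{34}.$$ Let $\beta=\frac18\sqrt{123\sqrt{41}-767}$. Then the set $\mathbf S$ of signatures of diagonal metrics on $\mathfrak g_a$ satisfying $\operatorname{Ric}=-\frac12\mathrm{id}+\frac12N$ is: for $a<\frac12-\beta$: $\{\emptyset,12457,1345,1357,234,47\}$; for $\frac12-\beta\le a<0$: $\{\emptyset,12457,125,1345,1357,234,237,47\}$; for $0<a<\frac12$: $\{\emptyset,12457,125,146,1345,1357,234,237,34567,47\}$; for $a=\frac12$: $\{\emptyset,12457,125,1357,146,234,237,34567\}$; for $\frac12<a<1$: $\{\emptyset,123467,12457,125,1357,146,234,237,2456,34567\}$; for $1<a\le\frac12+\beta$: $\{\emptyset,123467,125,1357,146,237,2456,34567\}$; for $\frac12+\beta<a$: $\{\emptyset,123467,1357,146,2456,34567\}$.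
   Context: $d$ is the Chevalley–Eilenberg differential and $e^{ij}=e^i\wedge e^j$; the basis $\{e_i\}$ is a nice basis (each $[e_i,e_j]$ is a multiple of some $e_k$ and each $e_i\lrcorner de^j$ a multiple of some $e^k$). The root matrix $M_\Delta$ has one row for each triple $(\{i,j\},k)$ with $[e_i,e_j]$ a nonzero multiple of $e_k$, with $+1$ in position $k$, $-1$ in positions $i,j$, $0$ elsewhere. $N$ is the diagonal Nikolayevsky derivation: the diagonal matrix (in the basis $\{e_i\}$) with diagonal $M_\Delta^Tb+[1]$, where $b$ solves $M_\Delta M_\Delta^Tb=[1]$ and $[1]$ is the all-ones vector. A diagonal metric is $\sum_i g_ie^i\otimes e^i$ with $g_i\neq0$, and $\operatorname{Ric}$ is its Ricci operator. A signature is recorded as the string of indices $i$ with $g_i<0$ (e.g. $1357$ means $g_1,g_3,g_5,g_7<0$ and the other $g_i>0$); $\emptyset$ denotes the positive definite signature. *)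

(* Defs.v *)
From HB Require Import structures.
From mathcomp Require Import all_boot all_order all_algebra.
From mathcomp Require Import reals.
Set Implicit Arguments. Unset Strict Implicit. Unset Printing Implicit Defensive.
Import Order.TTheory GRing.Theory Num.Theory.
Local Open Scope ring_scope.

(* [c i j k] is the structure constant: [e_i, e_j] = \sum_k c i j k e_k.      *)
(* [g i] is the diagonal metric  g = \sum_i g_i e^i (x) e^i.                   *)

(* Levi-Civita connection (Koszul formula for left-invariant fields):
   nabla_{e_i} e_j = \sum_k LC i j k e_k, where
   2 g(nabla_X Y, Z) = g([X,Y],Z) - g([Y,Z],X) + g([Z,X],Y). *)
Definition LC (R : realType) (n : nat) (c : 'I_n -> 'I_n -> 'I_n -> R)
  (g : 'I_n -> R) (i j k : 'I_n) : R :=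
  (c i j k * g k - c j k i * g i + c k i j * g j) / (2 * g k).

(* m-th component of R(e_i,e_j)e_l, with
   R(X,Y) = nabla_X nabla_Y - nabla_Y nabla_X - nabla_[X,Y]. *)
Definition curv (R : realType) (n : nat) (c : 'I_n -> 'I_n -> 'I_n -> R)
  (g : 'I_n -> R) (i j l m : 'I_n) : R :=
  \sum_(p < n) LC c g j l p * LC c g i p m
  - \sum_(p < n) LC c g i l p * LC c g j p m
  - \sum_(p < n) c i j p * LC c g p l m.

Definition ric (R : realType) (n : nat) (c : 'I_n -> 'I_n -> 'I_n -> R)
  (g : 'I_n -> R) (j l : 'I_n) : R :=
  \sum_(i < n) curv c g i j l i.

(* Ricci operator: g(Ric X, Y) = ric(X, Y); matrix acting on column vectors,
   column j = coordinates of Ric e_j. *)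
Definition ricci_op (R : realType) (n : nat) (c : 'I_n -> 'I_n -> 'I_n -> R)
  (g : 'I_n -> R) : 'M[R]_n :=
  \matrix_(l, j) (ric c g j l / g l).

Definition root_triples (R : realType) (n : nat)
  (c : 'I_n -> 'I_n -> 'I_n -> R) : seq ('I_n * 'I_n * 'I_n) :=
  [seq t : 'I_n * 'I_n * 'I_n <- [seq (ij, k) | ij <- [seq (i, j) | i <- enum 'I_n, j <- enum 'I_n], k <- enum 'I_n]
     | (t.1.1 < t.1.2)%N && (c t.1.1 t.1.2 t.2 != 0)].

Definition root_matrix (R : realType) (n : nat)
  (c : 'I_n -> 'I_n -> 'I_n -> R) : 'M[R]_(size (root_triples c), n) :=
  \matrix_(r < size (root_triples c), l < n)
    (let t := tnth (in_tuple (root_triples c)) r in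
     (l == t.2)%:R - (l == t.1.1)%:R - (l == t.1.2)%:R).

(* diagonal of N, as a row vector: (M^T b + [1])^T where M M^T b = [1];
   in row form b^T = [1]^T (M M^T)^+ solves b^T (M M^T) = [1]^T. *)
Definition nik_diag (R : realType) (n : nat)
  (c : 'I_n -> 'I_n -> 'I_n -> R) : 'rV[R]_n :=
  const_mx 1 *m pinvmx (root_matrix c *m (root_matrix c)^T) *m root_matrix c
  + const_mx 1.

Definition nikolayevsky (R : realType) (n : nat)
  (c : 'I_n -> 'I_n -> 'I_n -> R) : 'M[R]_n := diag_mx (nik_diag c).

Definition signature (R : realType) (n : nat) (g : 'I_n -> R) : {set 'I_n} :=
  [set i | g i < 0].

Definition inS (R : realType) (n : nat) (c : 'I_n -> 'I_n -> 'I_n -> R)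
  (sigma : {set 'I_n}) : Prop :=
  exists g : 'I_n -> R,
    (forall i, g i != 0) /\
    ricci_op c g = (- 2^-1) %:M + 2^-1 *: nikolayevsky c /\
    sigma = signature g.

(* coefficient of e^{ij} (i<j, 1-based indices) in de^k *)
Definition dcoef (R : realType) (a : R) (k i j : nat) : R :=
  match k, i, j with
  | 3, 1, 2 => 1 - a
  | 4, 1, 3 => 1
  | 5, 1, 4 => a
  | 5, 2, 3 => 1
  | 6, 1, 5 => 1
  | 6, 2, 4 => 1
  | 7, 1, 6 => 1
  | 7, 2, 5 => 1
  | 7, 3, 4 => 1
  | _, _, _ => 0
  end.

(* structure constants via de^k(e_i,e_j) = - e^k([e_i,e_j]), e^{ij}(e_i,e_j)=1;
   the basis vector e_{m+1} of the paper is the ordinal m : 'I_7. *)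
Definition ga (R : realType) (a : R) (i j k : 'I_7) : R :=
  if (i < j)%N then - dcoef a k.+1 i.+1 j.+1
  else if (j < i)%N then dcoef a k.+1 j.+1 i.+1
  else 0.

(* signature written as in the paper, from the list of 1-based indices *)
Definition sg (s : seq nat) : {set 'I_7} := [set i : 'I_7 | (i.+1 \in s)%N].

Definition beta (R : realType) : R :=
  Num.sqrt (123 * Num.sqrt 41 - 767) / 8.
Arguments sg s%_nat_scope.

(* Main.v *)
Require Import Defs.
From HB Require Import structures.
From mathcomp Require Import all_boot all_order all_algebra.
From mathcomp Require Import reals.
From mathcomp Require Import ring lra.
From Stdlib Require Import FunctionalExtensionality.
Set Implicit Arguments. Unset Strict Implicit. Unset Printing Implicit Defensive.
Import Order.TTheory GRing.Theory Num.Theory.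
Local Open Scope ring_scope.


Definition gv (R : realType) (g1 g2 g3 g4 g5 g6 g7 : R) : 'I_7 -> R :=
  fun i => nth 0 [:: g1; g2; g3; g4; g5; g6; g7] i.

Lemma sum7 (R : realType) (F : 'I_7 -> R) :
  \sum_(i < 7) F i = F (@Ordinal 7 0 isT) + F (@Ordinal 7 1 isT) + F (@Ordinal 7 2 isT) + F (@Ordinal 7 3 isT)
   + F (@Ordinal 7 4 isT) + F (@Ordinal 7 5 isT) + F (@Ordinal 7 6 isT).
Proof.
rewrite !big_ord_recl big_ord0 addr0 !addrA.
by repeat (congr (_ + _)); congr F; apply: val_inj.
Qed.


Definition X1 (R : realType) (a g1 g2 g3 g4 g5 g6 g7 : R) := (1-a)^+2 * g3/(g1*g2).
Definition X2 (R : realType) (a g1 g2 g3 g4 g5 g6 g7 : R) := g4/(g1*g3).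
Definition X3 (R : realType) (a g1 g2 g3 g4 g5 g6 g7 : R) := a^+2 * g5/(g1*g4).
Definition X4 (R : realType) (a g1 g2 g3 g4 g5 g6 g7 : R) := g5/(g2*g3).
Definition X5 (R : realType) (a g1 g2 g3 g4 g5 g6 g7 : R) := g6/(g1*g5).
Definition X6 (R : realType) (a g1 g2 g3 g4 g5 g6 g7 : R) := g6/(g2*g4).
Definition X7 (R : realType) (a g1 g2 g3 g4 g5 g6 g7 : R) := g7/(g1*g6).
Definition X8 (R : realType) (a g1 g2 g3 g4 g5 g6 g7 : R) := g7/(g2*g5).
Definition X9 (R : realType) (a g1 g2 g3 g4 g5 g6 g7 : R) := g7/(g3*g4).
Definition rho (R : realType) (a g1 g2 g3 g4 g5 g6 g7 : R) (k : nat) : R :=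
  let x1 := X1 a g1 g2 g3 g4 g5 g6 g7 in let x2 := X2 a g1 g2 g3 g4 g5 g6 g7 in
  let x3 := X3 a g1 g2 g3 g4 g5 g6 g7 in let x4 := X4 a g1 g2 g3 g4 g5 g6 g7 in
  let x5 := X5 a g1 g2 g3 g4 g5 g6 g7 in let x6 := X6 a g1 g2 g3 g4 g5 g6 g7 in
  let x7 := X7 a g1 g2 g3 g4 g5 g6 g7 in let x8 := X8 a g1 g2 g3 g4 g5 g6 g7 in
  let x9 := X9 a g1 g2 g3 g4 g5 g6 g7 in
  match k with
  | 0 => - (x1+x2+x3+x5+x7)/2
  | 1 => - (x1+x4+x6+x8)/2
  | 2 => (x1 - x2 - x4 - x9)/2
  | 3 => (x2 - x3 - x6 - x9)/2
  | 4 => (x3 + x4 - x5 - x8)/2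
  | 5 => (x5 + x6 - x7)/2
  | _ => (x7 + x8 + x9)/2
  end.

Definition lctn (R : realType) (a g1 g2 g3 g4 g5 g6 g7 : R) (i j k : nat) : R :=
  match i, j, k with
  | 0, 1, 2 => (- (1-a)) / 2
  | 0, 2, 1 => (1-a) * g3 / (2 * g2)
  | 0, 2, 3 => (- 1) / 2
  | 0, 3, 2 => 1 * g4 / (2 * g3)
  | 0, 3, 4 => (- a) / 2
  | 0, 4, 3 => a * g5 / (2 * g4)
  | 0, 4, 5 => (- 1) / 2
  | 0, 5, 4 => 1 * g6 / (2 * g5)
  | 0, 5, 6 => (- 1) / 2
  | 0, 6, 5 => 1 * g7 / (2 * g6)
  | 1, 0, 2 => (1-a) / 2
  | 1, 2, 0 => (- (1-a)) * g3 / (2 * g1)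
  | 1, 2, 4 => (- 1) / 2
  | 1, 3, 5 => (- 1) / 2
  | 1, 4, 2 => 1 * g5 / (2 * g3)
  | 1, 4, 6 => (- 1) / 2
  | 1, 5, 3 => 1 * g6 / (2 * g4)
  | 1, 6, 4 => 1 * g7 / (2 * g5)
  | 2, 0, 1 => - ((- (1-a)) * g3 / (2 * g2))
  | 2, 0, 3 => 1 / 2
  | 2, 1, 0 => - ((1-a) * g3 / (2 * g1))
  | 2, 1, 4 => 1 / 2
  | 2, 3, 0 => (- 1) * g4 / (2 * g1)
  | 2, 3, 6 => (- 1) / 2
  | 2, 4, 1 => (- 1) * g5 / (2 * g2)
  | 2, 6, 3 => 1 * g7 / (2 * g4)
  | 3, 0, 2 => - ((- 1) * g4 / (2 * g3))
  | 3, 0, 4 => a / 2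
  | 3, 1, 5 => 1 / 2
  | 3, 2, 0 => - (1 * g4 / (2 * g1))
  | 3, 2, 6 => 1 / 2
  | 3, 4, 0 => (- a) * g5 / (2 * g1)
  | 3, 5, 1 => (- 1) * g6 / (2 * g2)
  | 3, 6, 2 => (- 1) * g7 / (2 * g3)
  | 4, 0, 3 => - ((- a) * g5 / (2 * g4))
  | 4, 0, 5 => 1 / 2
  | 4, 1, 2 => - ((- 1) * g5 / (2 * g3))
  | 4, 1, 6 => 1 / 2
  | 4, 2, 1 => - (1 * g5 / (2 * g2))
  | 4, 3, 0 => - (a * g5 / (2 * g1))
  | 4, 5, 0 => (- 1) * g6 / (2 * g1)
  | 4, 6, 1 => (- 1) * g7 / (2 * g2)
  | 5, 0, 4 => - ((- 1) * g6 / (2 * g5))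
  | 5, 0, 6 => 1 / 2
  | 5, 1, 3 => - ((- 1) * g6 / (2 * g4))
  | 5, 3, 1 => - (1 * g6 / (2 * g2))
  | 5, 4, 0 => - (1 * g6 / (2 * g1))
  | 5, 6, 0 => (- 1) * g7 / (2 * g1)
  | 6, 0, 5 => - ((- 1) * g7 / (2 * g6))
  | 6, 1, 4 => - ((- 1) * g7 / (2 * g5))
  | 6, 2, 3 => - ((- 1) * g7 / (2 * g4))
  | 6, 3, 2 => - (1 * g7 / (2 * g3))
  | 6, 4, 1 => - (1 * g7 / (2 * g2))
  | 6, 5, 0 => - (1 * g7 / (2 * g1))
  | _, _, _ => 0
  end.
Definition gtab (R : realType) (a : R) (i j k : nat) : R :=
  match i, j, k with
  | 0, 1, 2 => (- (1-a))
  | 0, 2, 3 => (- 1)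
  | 0, 3, 4 => (- a)
  | 0, 4, 5 => (- 1)
  | 0, 5, 6 => (- 1)
  | 1, 0, 2 => (1-a)
  | 1, 2, 4 => (- 1)
  | 1, 3, 5 => (- 1)
  | 1, 4, 6 => (- 1)
  | 2, 0, 3 => 1
  | 2, 1, 4 => 1
  | 2, 3, 6 => (- 1)
  | 3, 0, 4 => a
  | 3, 1, 5 => 1
  | 3, 2, 6 => 1
  | 4, 0, 5 => 1
  | 4, 1, 6 => 1
  | 5, 0, 6 => 1
  | _, _, _ => 0
  end.

Lemma LCE (R : realType) (a g1 g2 g3 g4 g5 g6 g7 : R) :
  g1 != 0 -> g2 != 0 -> g3 != 0 -> g4 != 0 -> g5 != 0 -> g6 != 0 -> g7 != 0 ->
  forall i j k : 'I_7, LC (ga a) (gv g1 g2 g3 g4 g5 g6 g7) i j k = lctn a g1 g2 g3 g4 g5 g6 g7 i j k.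
Proof.
move=> H1 H2 H3 H4 H5 H6 H7.
move=> [[|[|[|[|[|[|[|i]]]]]]] Hi] //;
move=> [[|[|[|[|[|[|[|j]]]]]]] Hj] //;
move=> [[|[|[|[|[|[|[|k]]]]]]] Hk] //;
rewrite /LC /ga /gv /=; field; by rewrite ?H1 ?H2 ?H3 ?H4 ?H5 ?H6 ?H7.
Qed.

Lemma gaE (R : realType) (a : R) : ga a = fun i j k : 'I_7 => gtab a i j k.
Proof.
apply: functional_extensionality => i; apply: functional_extensionality => j;
apply: functional_extensionality => k; move: i j k.
move=> [[|[|[|[|[|[|[|i]]]]]]] Hi] //;
move=> [[|[|[|[|[|[|[|j]]]]]]] Hj] //;
move=> [[|[|[|[|[|[|[|k]]]]]]] Hk] //; by rewrite /ga /= ?oppr0.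
Qed.


Lemma ricci_gv (R : realType) (a g1 g2 g3 g4 g5 g6 g7 : R) :
  g1 != 0 -> g2 != 0 -> g3 != 0 -> g4 != 0 -> g5 != 0 -> g6 != 0 -> g7 != 0 ->
  ricci_op (ga a) (gv g1 g2 g3 g4 g5 g6 g7) =
  diag_mx (\row_(k < 7) rho a g1 g2 g3 g4 g5 g6 g7 k).
Proof.
move=> H1 H2 H3 H4 H5 H6 H7.
have LCf : LC (ga a) (gv g1 g2 g3 g4 g5 g6 g7) = fun i j k => lctn a g1 g2 g3 g4 g5 g6 g7 i j k.
  apply: functional_extensionality => i; apply: functional_extensionality => j;
  apply: functional_extensionality => k; exact: LCE.
apply/matrixP => l j; rewrite !mxE /ric /curv LCf gaE !sum7.
case: l => [[|[|[|[|[|[|[|l]]]]]]] Hl] //;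
case: j => [[|[|[|[|[|[|[|j]]]]]]] Hj] //; rewrite /=;
simpl lctn; simpl gtab;
rewrite /gv /rho /X1 /X2 /X3 /X4 /X5 /X6 /X7 /X8 /X9; simpl nth;
(field; by rewrite ?H1 ?H2 ?H3 ?H4 ?H5 ?H6 ?H7).
Qed.


Definition Tn : seq (nat * nat * nat) :=
  [:: (0,1,2); (0,2,3); (0,3,4); (0,4,5); (0,5,6); (1,2,4); (1,3,5); (1,4,6); (2,3,6)]%N.

Definition tv (t : 'I_7 * 'I_7 * 'I_7) : nat * nat * nat := (val t.1.1, val t.1.2, val t.2).

Lemma enum7 : enum 'I_7 = [:: @Ordinal 7 0 isT; @Ordinal 7 1 isT; @Ordinal 7 2 isT;
  @Ordinal 7 3 isT; @Ordinal 7 4 isT; @Ordinal 7 5 isT; @Ordinal 7 6 isT].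
Proof. by apply: (inj_map val_inj); rewrite val_enum_ord. Qed.

Lemma rtE (R : realType) (a : R) : a != 0 -> a != 1 ->
  map tv (root_triples (ga a)) = Tn.
Proof.
move=> ha0 ha1.
rewrite /root_triples.
rewrite (@eq_filter _ _ (fun t : 'I_7 * 'I_7 * 'I_7 => (t.1.1 < t.1.2)%N && (tv t \in Tn))); last first.
  move=> [[i j] k] /=; case: ltnP => //= Hij.
  rewrite /ga Hij oppr_eq0.
  case: i Hij => [[|[|[|[|[|[|[|i]]]]]]] Hi] //;
  case: j => [[|[|[|[|[|[|[|j]]]]]]] Hj] //;
  case: k => [[|[|[|[|[|[|[|k]]]]]]] Hk] //= _;
  by rewrite ?eqxx ?oner_eq0 ?ha0 // subr_eq0 eq_sym.
by rewrite enum7; vm_compute.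
Qed.

Definition bfn (R : realType) (u : nat * nat * nat) : R :=
  if u == (0,2,3)%N then - 5^-1 else if u == (1,2,4)%N then 3 / 5
  else if u == (0,4,5)%N then 3 / 5 else if u == (0,5,6)%N then 2 / 5 else 0.

Lemma nikE (R : realType) (a : R) : a != 0 -> a != 1 ->
  nik_diag (ga a) = \row_(l < 7) ((l.+1)%:R / 5).
Proof.
move=> ha0 ha1.
have Hrt := rtE ha0 ha1.
rewrite /nik_diag.
set rt := root_triples (ga a) in Hrt *.
set M := root_matrix (ga a).
set d : 'rV[R]_7 := \row_(l < 7) ((l.+1)%:R / 5 - 1).
have memT : forall t, t \in rt -> tv t \in Tn by move=> t Ht; rewrite -Hrt; apply: map_f.
have K2 : d *m M^T = const_mx 1.
  apply/rowP => r; rewrite mxE sum7 !mxE.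
  move: (memT _ (mem_tnth r (in_tuple rt))).
  case: (tnth (in_tuple rt) r) => [[i j] k].
  case: i => [[|[|[|[|[|[|[|i]]]]]]] Hi] //;
  case: j => [[|[|[|[|[|[|[|j]]]]]]] Hj] //;
  case: k => [[|[|[|[|[|[|[|k]]]]]]] Hk] //=; rewrite /tv /= => // _.
  all: try rewrite -!val_eqE /=.
  1-9: lra.
pose G (l : 'I_7) (u : nat * nat * nat) : R :=
  bfn R u * ((val l == u.2)%:R - (val l == u.1.1)%:R - (val l == u.1.2)%:R).
pose b : 'rV[R]_(size rt) := \row_r bfn R (tv (tnth (in_tuple rt) r)).
have K3 : b *m M = d.
  apply/rowP => l; rewrite !mxE.
  rewrite (eq_bigr (fun r => G l (tv (tnth (in_tuple rt) r)))); last first.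
    by move=> rr _; rewrite !mxE /G /tv -!val_eqE.
  rewrite -(big_tnth _ _ rt xpredT (fun t => G l (tv t))) -(big_map tv xpredT (G l)) Hrt.
  rewrite !big_cons big_nil /G /bfn.
  case: l => [[|[|[|[|[|[|[|l]]]]]]] Hl] //=; lra.
have Hb : b *m (M *m M^T) = const_mx 1 by rewrite mulmxA K3 K2.
have Hsub := submxMl b (M *m M^T); rewrite Hb in Hsub.
set u := const_mx 1 *m pinvmx (M *m M^T).
have Hu : u *m (M *m M^T) = const_mx 1 := mulmxKpV Hsub.
have Hw : ((u - b) *m M) *m M^T = 0 by rewrite -mulmxA mulmxBl Hu Hb subrr.
have Hww : ((u - b) *m M) *m ((u - b) *m M)^T = 0 by rewrite trmx_mul mulmxA Hw mul0mx.
have Hw0 : (u - b) *m M = 0.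
  move: Hww; set w := (u - b) *m M => Hww; clearbody w.
  have: (w *m w^T) 0 0 = 0 by rewrite Hww mxE.
  rewrite mxE => /eqP; rewrite psumr_eq0 => [/allP H|i _]; last by rewrite mxE -expr2 sqr_ge0.
  apply/rowP => i; rewrite mxE; have := H i (mem_index_enum i).
  by rewrite mxE -expr2 sqrf_eq0 => /eqP.
move: Hw0; rewrite mulmxBl K3 => /eqP; rewrite subr_eq0 => /eqP ->.
apply/rowP => l; rewrite !mxE; lra.
Qed.


Lemma wfacts (R : realType) :
  let w := Num.sqrt (41 : R) in [/\ w ^+ 2 = 41, 32/5 < w & w < 641/100].
Proof.
move=> w.
have w2 : w ^+ 2 = 41 by rewrite sqr_sqrtr //; lra.
have w0 : 0 <= w by apply: sqrtr_ge0.
split => //; nra.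
Qed.

Definition Bc (R : realType) : R := (123 * Num.sqrt 41 - 767) / 16.

Lemma betaE (R : realType) : 0 <= beta R /\ 4 * (beta R) ^+ 2 = Bc R.
Proof.
have [w2 wl wu] := wfacts R.
rewrite /beta /Bc; split.
  apply: divr_ge0; [exact: sqrtr_ge0 | lra].
rewrite expr_div_n sqr_sqrtr; last lra.
by field.
Qed.

Lemma Bc_bounds (R : realType) : 5/4 < Bc R < 27/20.
Proof. have [w2 wl wu] := wfacts R; rewrite /Bc; apply/andP; split; lra. Qed.

Lemma hQ (R : realType) (Q : R) : Q <= -3 ->
  Bc R * Q * (1 + Q) ^+ 2 <= (2 - Q) ^+ 2 * (Q + 3).
Proof.
move=> HQ.
have [w2 wl wu] := wfacts R.
set w := Num.sqrt 41 in w2 wl wu.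
have E : (2 - Q) ^+ 2 * (Q + 3) - Bc R * Q * (1 + Q) ^+ 2 =
   (Q + (7 + w)/2) ^+ 2 * ((1 - Bc R) * Q + (135 - 21 * w) / 2)
   + (w ^+ 2 - 41) * (123/64 * Q * w + 21/8 * w + 123/16 * Q ^+ 2 + 1611/64 * Q + 159/8).
  by rewrite /Bc -/w; field.
rewrite w2 subrr mul0r addr0 in E.
rewrite -subr_ge0 E; apply: mulr_ge0; first exact: sqr_ge0.
rewrite /Bc -/w; nra.
Qed.

Definition scen (R : realType) (a : R) (A D G : bool) : Prop :=
  (A, D, G) = (a < 1, 0 < a, true) \/
  (A, D, G) = (a < 1, 0 < a, false) \/
  (a < 2^-1 /\ (A, D, G) = (true, a < 0, true)) \/
  (2^-1 < a /\ (A, D, G) = (1 < a, true, true)) \/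
  (a = 2^-1 /\ ((A, D, G) = (true, false, true) \/ (A, D, G) = (false, true, true))) \/
  (2^-1 < a < 1 /\ (A, D, G) = (true, false, true)) \/
  (0 < a < 2^-1 /\ (A, D, G) = (false, true, true)) \/
  (2^-1 - beta R <= a < 2^-1 /\ (A, D, G) = (true, a < 0, false)) \/
  (2^-1 < a <= 2^-1 + beta R /\ (A, D, G) = (1 < a, true, false)).

Ltac bsolve := solve [ nra | apply/negbTE; rewrite -leNgt; nra | apply/idP/idP => ?; nra ].
Ltac tsolve := congr (_, _, _); bsolve.

Lemma neq0_lt (R : realType) (x : R) : x != 0 -> x < 0 \/ 0 < x.
Proof. by rewrite neq_lt => /orP. Qed.

Lemma minus_regions (R : realType) (a s q : R) : s != 0 -> q != 0 -> q + 1/5 != 0 ->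
  q = 2/5 - (1 - 2*a) * s -> s^+2 * (q + 3/5) = q * (q + 1/5)^+2 ->
  scen a (0 < (1-a)*s) (0 < -a*s) (0 < q).
Proof.
move=> hs hq hq1 Hq C.
have s2 : 0 < s^+2 by rewrite lt_def sqrf_eq0 hs sqr_ge0.
have t2 : 0 < (q + 1/5)^+2 by rewrite lt_def sqrf_eq0 hq1 sqr_ge0.
have q2 : 0 < q^+2 by rewrite lt_def sqrf_eq0 hq sqr_ge0.
have F1 : 0 < q * (q + 3/5).
  have : s^+2 * (q * (q + 3/5)) = q^+2 * (q+1/5)^+2 by rewrite mulrCA C; ring.
  move=> E; have : 0 < s^+2 * (q * (q + 3/5)) by rewrite E; apply: mulr_gt0.
  by rewrite pmulr_rgt0.
have F2 : (1 - 2*a) * s = 2/5 - q by lra.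
have F3 : (1 - 2*a)^+2 * (q * (q + 1/5)^+2) = (2/5 - q)^+2 * (q + 3/5).
  by rewrite -C -F2; ring.
have [b0 b4] := betaE R.
have [qpos|qneg] : 0 < q \/ q < -3/5.
  by case: (ltrP 0 q) => Hq0; [left | right]; nra.
- case: (ltgtP q (2/5)) => Hq2.
  + case: (neq0_lt hs) => Hs.
    * do 3 right; left; split; [nra | tsolve].
    * do 2 right; left; split; [nra | tsolve].
  + have m2 : (1 - 2*a)^+2 < 1.
      have H1 : (2/5 - q)^+2 * (q + 3/5) < q * (q + 1/5)^+2 by nra.
      have H2 : 0 < q * (q + 1/5)^+2 by apply: mulr_gt0.
      nra.
    case: (neq0_lt hs) => Hs.
    * do 6 right; left; split; [apply/andP; split; nra | tsolve].
    * do 5 right; left; split; [apply/andP; split; nra | tsolve].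
  + have ha : a = 2^-1.
      have : (1 - 2*a) * s = 0 by rewrite F2 Hq2; lra.
      by move/eqP; rewrite mulf_eq0 (negbTE hs) orbF subr_eq0 => /eqP; lra.
    do 4 right; left; split => //.
    case: (neq0_lt hs) => Hs.
    * right; tsolve.
    * left; tsolve.
- have mB : (1 - 2*a)^+2 <= Bc R.
    have H : Bc R * (5*q) * (1 + 5*q)^+2 <= (2 - 5*q)^+2 * (5*q + 3) by apply: hQ; lra.
    have H2 : q * (q + 1/5)^+2 < 0 by nra.
    nra.
  case: (neq0_lt hs) => Hs.
  * do 8 right; split; [apply/andP; split; nra | tsolve].
  * do 7 right; left; split; [apply/andP; split; nra | tsolve].
Qed.

Lemma sqr_pos (R : realType) (x : R) : x != 0 -> 0 < x ^+ 2.
Proof. by move=> h; rewrite lt_def sqrf_eq0 h sqr_ge0. Qed.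

Lemma fwd (R : realType) (a x1 x2 x3 x4 x5 x6 x7 x8 x9 : R) :
  a != 0 -> a != 1 -> x1 != 0 -> x2 != 0 -> x3 != 0 -> x4 != 0 -> x6 != 0 -> x7 != 0 ->
  x1+x2+x3+x5+x7 = 4/5 -> x1+x4+x6+x8 = 3/5 -> x1 - x2 - x4 - x9 = -2/5 ->
  x2 - x3 - x6 - x9 = -1/5 -> x3 + x4 - x5 - x8 = 0 -> x5 + x6 - x7 = 1/5 ->
  x7 + x8 + x9 = 2/5 ->
  x2 * x6 = x4 * x5 -> x3 * x8 = a^+2 * (x6 * x7) -> x1 * x9 = (1-a)^+2 * (x6 * x7) ->
  [/\ 0 < x4, 0 < x5, (0 < x2) = (0 < x7) & scen a (0 < x1) (0 < x3) (0 < x7)].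
Proof.
move=> ha0 ha1 h1 h2 h3 h4 h6 h7 E1 E2 E3 E4 E5 E6 E7 R1 R2 R3.
have L1 : x9 = x1 by lra.
have L2 : x8 = x3 by lra.
have L3 : x5 = x4 by lra.
have L4 : x2 = 1/5 + x6 - x7 by lra.
have L5 : x4 = 1/5 + x7 - x6 by lra.
have L6 : x3 = 2/5 - x7 - x1 by lra.
have ha1' : 1 - a != 0 by rewrite subr_eq0 eq_sym.
have [s Hs] : exists s, x1 = (1-a)*s by exists (x1/(1-a)); field.
subst x9 x8 x5.
clear E1 E2 E3 E4 E5 E6 E7.
have hs : s != 0 by move: h1; rewrite Hs mulf_eq0 negb_or => /andP[].
have s2 := sqr_pos hs.
have K2 : x6 * x7 = s^+2.
  apply: (mulfI (expf_neq0 2 ha1')); rewrite -R3 Hs; ring.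
have K1 : x6 * (x7 + 3/5) = (x7 + 1/5)^+2.
  move: R1; rewrite L4 L5 => R1; lra.
have hq1 : x7 + 1/5 != 0.
  apply/negP => /eqP E; have : x6 * (2/5) = 0 by rewrite -(_ : x7 + 3/5 = 2/5) ?K1 ?E ?expr0n //; lra.
  by move/eqP; rewrite mulf_eq0 (negbTE h6) /=; apply/negP; lra.
have t2 := sqr_pos hq1.
have X4E : x4 * (x7 + 3/5) = 2/5 * (x7 + 1/5) by rewrite L5; lra.
have x4p : 0 < x4.
  case: (neq0_lt h7) => Hq.
  - have Hp : x6 < 0 by nra.
    have Hq3 : x7 + 3/5 < 0 by nra.
    nra.
  - have Hp : 0 < x6 by nra.
    nra.
have x2s : (0 < x2) = (0 < x7).
  have : x2 * x6 = x4 ^+ 2 by rewrite R1 expr2.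
  move=> E; have x42 := sqr_pos h4.
  apply/idP/idP => H; nra.
split => //.
have cub : s^+2 * (x7 + 3/5) = x7 * (x7 + 1/5)^+2 by rewrite -K2 -K1; ring.
have E0 : x3 * x3 = a^+2 * s^+2 by rewrite R2 K2.
have E1' : (x3 - a*s)*(x3+a*s) = x3*x3 - a^+2*s^+2 by ring.
have : (x3 - a * s) * (x3 + a * s) = 0 by rewrite E1' E0 subrr.
case/eqP; rewrite mulf_eq0 => /orP[] /eqP E.
- have Hq : x7 = 2/5 - s by lra.
  have : (5 * s - 1) * (5 * s - 6) = 0.
    have : (5 * s - 1) * (5 * s - 6) = (125/3) * (x7 * (x7 + 1/5)^+2 - s^+2 * (x7 + 3/5))
      by rewrite Hq; field.
    by rewrite cub subrr mulr0.
  move/eqP; rewrite mulf_eq0 => /orP[] /eqP Es.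
  + left; rewrite Hs; tsolve.
  + right; left; rewrite Hs; tsolve.
- have Hq : x7 = 2/5 - (1 - 2*a) * s by lra.
  have -> : x3 = -a * s by lra.
  rewrite Hs; exact: minus_regions.
Qed.


Definition Eqs (R : realType) (a g1 g2 g3 g4 g5 g6 g7 : R) : Prop :=
  let x1 := X1 a g1 g2 g3 g4 g5 g6 g7 in let x2 := X2 a g1 g2 g3 g4 g5 g6 g7 in
  let x3 := X3 a g1 g2 g3 g4 g5 g6 g7 in let x4 := X4 a g1 g2 g3 g4 g5 g6 g7 in
  let x5 := X5 a g1 g2 g3 g4 g5 g6 g7 in let x6 := X6 a g1 g2 g3 g4 g5 g6 g7 in
  let x7 := X7 a g1 g2 g3 g4 g5 g6 g7 in let x8 := X8 a g1 g2 g3 g4 g5 g6 g7 in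
  let x9 := X9 a g1 g2 g3 g4 g5 g6 g7 in
  x1+x2+x3+x5+x7 = 4/5 /\ x1+x4+x6+x8 = 3/5 /\ x1 - x2 - x4 - x9 = -2/5 /\
  x2 - x3 - x6 - x9 = -1/5 /\ x3 + x4 - x5 - x8 = 0 /\ x5 + x6 - x7 = 1/5 /\
  x7 + x8 + x9 = 2/5.

Definition sgfun (e A D G : bool) : {set 'I_7} :=
  let n2 := D (+) G in
  let n3 := (~~ A) (+) e (+) n2 in
  let n4 := (~~ G) (+) e (+) n3 in
  let n5 := (~~ D) (+) e (+) n4 in
  let n6 := e (+) n5 in
  let n7 := (~~ G) (+) e (+) n6 in
  sg [seq k <- [:: 1; 2; 3; 4; 5; 6; 7] | nth false [:: e; n2; n3; n4; n5; n6; n7] k.-1]%N.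

Lemma negE (R : realType) (x : R) : x != 0 -> (x < 0) = ~~ (0 < x).
Proof. by move=> hx; rewrite ltNge le_eqVlt eq_sym (negbTE hx). Qed.

Lemma sig_core (R : realType) (a g1 g2 g3 g4 g5 g6 g7 x1 x2 x3 x4 x5 x7 : R) :
  g1 != 0 -> g2 != 0 -> g3 != 0 -> g4 != 0 -> g5 != 0 -> g6 != 0 -> g7 != 0 ->
  x1 != 0 -> x2 != 0 -> x3 != 0 -> x7 != 0 -> a != 0 -> 1 - a != 0 ->
  0 < x4 -> 0 < x5 -> (0 < x2) = (0 < x7) ->
  g2 * (a^+2 * x4) = x3 * x2 * g1^+2 -> g3 * (1-a)^+2 = x1 * g1 * g2 -> g4 = x2 * g1 * g3 ->
  g5 * a^+2 = x3 * g1 * g4 -> g6 = x5 * g1 * g5 -> g7 = x7 * g1 * g6 ->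
  signature (gv g1 g2 g3 g4 g5 g6 g7) = sgfun (g1 < 0) (0 < x1) (0 < x3) (0 < x7).
Proof.
move=> h1 h2 h3 h4 h5 h6 h7 hx1 hx2 hx3 hx7 ha ha1 p4 p5 s27 I2 I3 I4 I5 I6 I7.
have a2 : 0 < a^+2 by apply: sqr_pos.
have a12 : 0 < (1-a)^+2 by apply: sqr_pos.
have g12 : 0 < g1^+2 by apply: sqr_pos.
have S2 : (g2 < 0) = ~~ (0 < x3) (+) ~~ (0 < x7).
  rewrite -(pmulr_llt0 _ (mulr_gt0 a2 p4)) I2 pmulr_llt0 // neq0_mulr_lt0 //.
  by rewrite !negE // s27.
have S3 : (g3 < 0) = ~~ (0 < x1) (+) (g1 < 0) (+) (g2 < 0).
  rewrite -(pmulr_llt0 _ a12) I3 neq0_mulr_lt0 ?mulf_neq0 // neq0_mulr_lt0 //.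
  by rewrite (negE hx1).
have S4 : (g4 < 0) = ~~ (0 < x7) (+) (g1 < 0) (+) (g3 < 0).
  rewrite I4 neq0_mulr_lt0 ?mulf_neq0 // neq0_mulr_lt0 //.
  by rewrite (negE hx2) s27.
have S5 : (g5 < 0) = ~~ (0 < x3) (+) (g1 < 0) (+) (g4 < 0).
  rewrite -(pmulr_llt0 _ a2) I5 neq0_mulr_lt0 ?mulf_neq0 // neq0_mulr_lt0 //.
  by rewrite (negE hx3).
have S6 : (g6 < 0) = (g1 < 0) (+) (g5 < 0).
  by rewrite I6 -mulrA pmulr_rlt0 // neq0_mulr_lt0.
have S7 : (g7 < 0) = ~~ (0 < x7) (+) (g1 < 0) (+) (g6 < 0).
  rewrite I7 neq0_mulr_lt0 ?mulf_neq0 // neq0_mulr_lt0 //.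
  by rewrite (negE hx7).
apply/setP => i; rewrite /signature /sgfun /sg !inE.
case: i => [[|[|[|[|[|[|[|i]]]]]]] Hi] //; rewrite /gv /=;
rewrite ?S7 ?S6 ?S5 ?S4 ?S3 ?S2;
by case: (g1 < 0); case: (0 < x1); case: (0 < x3); case: (0 < x7).
Qed.

Ltac nzt h1 h2 h3 h4 h5 h6 h7 ha0 ha1 :=
  rewrite ?(mulf_eq0, invr_eq0, expf_eq0) /= ?(negbTE h1) ?(negbTE h2) ?(negbTE h3)
    ?(negbTE h4) ?(negbTE h5) ?(negbTE h6) ?(negbTE h7) ?(negbTE ha0) ?(negbTE ha1).

Lemma sig_of_eqs (R : realType) (a g1 g2 g3 g4 g5 g6 g7 : R) :
  a != 0 -> a != 1 ->
  g1 != 0 -> g2 != 0 -> g3 != 0 -> g4 != 0 -> g5 != 0 -> g6 != 0 -> g7 != 0 ->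
  Eqs a g1 g2 g3 g4 g5 g6 g7 ->
  signature (gv g1 g2 g3 g4 g5 g6 g7) =
    sgfun (g1 < 0) (0 < X1 a g1 g2 g3 g4 g5 g6 g7) (0 < X3 a g1 g2 g3 g4 g5 g6 g7)
      (0 < X7 a g1 g2 g3 g4 g5 g6 g7) /\
  scen a (0 < X1 a g1 g2 g3 g4 g5 g6 g7) (0 < X3 a g1 g2 g3 g4 g5 g6 g7)
      (0 < X7 a g1 g2 g3 g4 g5 g6 g7).
Proof.
move=> ha0 ha1 h1 h2 h3 h4 h5 h6 h7 [E1 [E2 [E3 [E4 [E5 [E6 E7]]]]]].
have ha1' : 1 - a != 0 by rewrite subr_eq0 eq_sym.
have n1 : X1 a g1 g2 g3 g4 g5 g6 g7 != 0 by rewrite /X1; nzt h1 h2 h3 h4 h5 h6 h7 ha0 ha1'.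
have n2 : X2 a g1 g2 g3 g4 g5 g6 g7 != 0 by rewrite /X2; nzt h1 h2 h3 h4 h5 h6 h7 ha0 ha1'.
have n3 : X3 a g1 g2 g3 g4 g5 g6 g7 != 0 by rewrite /X3; nzt h1 h2 h3 h4 h5 h6 h7 ha0 ha1'.
have n4 : X4 a g1 g2 g3 g4 g5 g6 g7 != 0 by rewrite /X4; nzt h1 h2 h3 h4 h5 h6 h7 ha0 ha1'.
have n6 : X6 a g1 g2 g3 g4 g5 g6 g7 != 0 by rewrite /X6; nzt h1 h2 h3 h4 h5 h6 h7 ha0 ha1'.
have n7 : X7 a g1 g2 g3 g4 g5 g6 g7 != 0 by rewrite /X7; nzt h1 h2 h3 h4 h5 h6 h7 ha0 ha1'.
have R1 : X2 a g1 g2 g3 g4 g5 g6 g7 * X6 a g1 g2 g3 g4 g5 g6 g7 =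
          X4 a g1 g2 g3 g4 g5 g6 g7 * X5 a g1 g2 g3 g4 g5 g6 g7.
  rewrite /X2 /X4 /X5 /X6; field; by rewrite ?h1 ?h2 ?h3 ?h4 ?h5 ?h6 ?h7.
have R2 : X3 a g1 g2 g3 g4 g5 g6 g7 * X8 a g1 g2 g3 g4 g5 g6 g7 =
          a^+2 * (X6 a g1 g2 g3 g4 g5 g6 g7 * X7 a g1 g2 g3 g4 g5 g6 g7).
  rewrite /X3 /X6 /X7 /X8; field; by rewrite ?h1 ?h2 ?h3 ?h4 ?h5 ?h6 ?h7.
have R3 : X1 a g1 g2 g3 g4 g5 g6 g7 * X9 a g1 g2 g3 g4 g5 g6 g7 =
          (1-a)^+2 * (X6 a g1 g2 g3 g4 g5 g6 g7 * X7 a g1 g2 g3 g4 g5 g6 g7).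
  rewrite /X1 /X6 /X7 /X9; field; by rewrite ?h1 ?h2 ?h3 ?h4 ?h5 ?h6 ?h7.
have [p4 p5 s27 Hs] := fwd ha0 ha1 n1 n2 n3 n4 n6 n7 E1 E2 E3 E4 E5 E6 E7 R1 R2 R3.
split => //.
apply: (@sig_core _ a g1 g2 g3 g4 g5 g6 g7 (X1 a g1 g2 g3 g4 g5 g6 g7)
  (X2 a g1 g2 g3 g4 g5 g6 g7) (X3 a g1 g2 g3 g4 g5 g6 g7) (X4 a g1 g2 g3 g4 g5 g6 g7)
  (X5 a g1 g2 g3 g4 g5 g6 g7) (X7 a g1 g2 g3 g4 g5 g6 g7)) => //.
- rewrite /X2 /X3 /X4; field; by rewrite ?h1 ?h2 ?h3 ?h4 ?h5 ?h6 ?h7 ?ha0.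
- rewrite /X1; field; by rewrite ?h1 ?h2 ?h3 ?h4 ?h5 ?h6 ?h7 ?ha1'.
- rewrite /X2; field; by rewrite ?h1 ?h2 ?h3 ?h4 ?h5 ?h6 ?h7.
- rewrite /X3; field; by rewrite ?h1 ?h2 ?h3 ?h4 ?h5 ?h6 ?h7 ?ha0.
- rewrite /X5; field; by rewrite ?h1 ?h2 ?h3 ?h4 ?h5 ?h6 ?h7.
- rewrite /X7; field; by rewrite ?h1 ?h2 ?h3 ?h4 ?h5 ?h6 ?h7.
Qed.

Lemma TM (R : realType) (a : R) : a != 0 -> a != 1 ->
  (- 2^-1)%:M + 2^-1 *: nikolayevsky (ga a) =
  diag_mx (\row_(k < 7) (- 2^-1 + 2^-1 * (k.+1%:R / 5))).
Proof.
move=> ha0 ha1; rewrite /nikolayevsky nikE //.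
apply/matrixP => i j; rewrite !mxE.
case: (eqVneq i j) => [->|ne]; rewrite ?eqxx ?(negbTE ne) /=.
- by rewrite !mulr1n.
- by rewrite !mulr0n mulr0 addr0.
Qed.

Lemma gv_eta (R : realType) (g : 'I_7 -> R) :
  g = gv (g (@Ordinal 7 0 isT)) (g (@Ordinal 7 1 isT)) (g (@Ordinal 7 2 isT))
         (g (@Ordinal 7 3 isT)) (g (@Ordinal 7 4 isT)) (g (@Ordinal 7 5 isT))
         (g (@Ordinal 7 6 isT)).
Proof.
apply: functional_extensionality => -[[|[|[|[|[|[|[|i]]]]]]] Hi] //=;
by rewrite /gv /=; congr g; apply: val_inj.
Qed.

Lemma inS_iff (R : realType) (a : R) (sigma : {set 'I_7}) : a != 0 -> a != 1 ->
  inS (ga a) sigma <-> exists g1 g2 g3 g4 g5 g6 g7 : R,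
  [/\ [/\ g1 != 0, g2 != 0, g3 != 0, g4 != 0 & g5 != 0], g6 != 0, g7 != 0,
      Eqs a g1 g2 g3 g4 g5 g6 g7 & sigma = signature (gv g1 g2 g3 g4 g5 g6 g7)].
Proof.
move=> ha0 ha1; split.
- case=> g [Hnz [Hric ->]].
  rewrite (gv_eta g) in Hric *.
  set g1 := g (@Ordinal 7 0 isT) in Hric *.
  set g2 := g (@Ordinal 7 1 isT) in Hric *.
  set g3 := g (@Ordinal 7 2 isT) in Hric *.
  set g4 := g (@Ordinal 7 3 isT) in Hric *.
  set g5 := g (@Ordinal 7 4 isT) in Hric *.
  set g6 := g (@Ordinal 7 5 isT) in Hric *.
  set g7 := g (@Ordinal 7 6 isT) in Hric *.
  have h1 : g1 != 0 by apply: Hnz.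
  have h2 : g2 != 0 by apply: Hnz.
  have h3 : g3 != 0 by apply: Hnz.
  have h4 : g4 != 0 by apply: Hnz.
  have h5 : g5 != 0 by apply: Hnz.
  have h6 : g6 != 0 by apply: Hnz.
  have h7 : g7 != 0 by apply: Hnz.
  exists g1, g2, g3, g4, g5, g6, g7; split => //.
  rewrite ricci_gv // TM // in Hric.
  have Hk : forall k : 'I_7, rho a g1 g2 g3 g4 g5 g6 g7 k = - 2^-1 + 2^-1 * (k.+1%:R / 5).
    by move=> k; have := congr1 (fun M : 'M[R]_7 => M k k) Hric; rewrite !mxE eqxx !mulr1n.
  have K0 := Hk (@Ordinal 7 0 isT); have K1 := Hk (@Ordinal 7 1 isT);
  have K2 := Hk (@Ordinal 7 2 isT); have K3 := Hk (@Ordinal 7 3 isT);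
  have K4 := Hk (@Ordinal 7 4 isT); have K5 := Hk (@Ordinal 7 5 isT);
  have K6 := Hk (@Ordinal 7 6 isT).
  rewrite /rho /= in K0 K1 K2 K3 K4 K5 K6.
  split; [lra | split; [lra | split; [lra | split; [lra | split; [lra | split; lra]]]]].
- case=> g1 [g2 [g3 [g4 [g5 [g6 [g7 [[h1 h2 h3 h4 h5] h6 h7 HE ->]]]]]]].
  exists (gv g1 g2 g3 g4 g5 g6 g7); split.
    by case=> [[|[|[|[|[|[|[|i]]]]]]] Hi].
  split => //.
  rewrite ricci_gv // TM //; congr diag_mx; apply/rowP => k; rewrite !mxE.
  case: HE => [E1 [E2 [E3 [E4 [E5 [E6 E7]]]]]].
  case: k => [[|[|[|[|[|[|[|k]]]]]]] Hk] //; rewrite /rho /=; lra.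
Qed.


Lemma build1 (R : realType) (a s q x3 : R) :
  a != 0 -> a != 1 -> s != 0 -> q != 0 -> q + 1/5 != 0 ->
  x3 = 2/5 - q - (1-a)*s -> x3 * x3 = a^+2 * s^+2 -> s^+2 * (q + 3/5) = q * (q + 1/5)^+2 ->
  exists g2 g3 g4 g5 g6 g7 : R,
  [/\ [/\ g2 != 0, g3 != 0, g4 != 0, g5 != 0 & g6 != 0], g7 != 0,
      Eqs a 1 g2 g3 g4 g5 g6 g7,
      X1 a 1 g2 g3 g4 g5 g6 g7 = (1-a)*s &
      (X3 a 1 g2 g3 g4 g5 g6 g7 = x3 /\ X7 a 1 g2 g3 g4 g5 g6 g7 = q)].
Proof.
move=> ha0 ha1 hs hq hq1 Hx3 Hx3s C.
have ha1' : 1 - a != 0 by rewrite subr_eq0 eq_sym.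
pose p := s^+2 / q.
have pq : p * q = s^+2 by rewrite /p; field.
have hp : p != 0 by rewrite /p mulf_eq0 invr_eq0 negb_or hq andbT sqrf_eq0.
have K1 : p * (q + 3/5) = (q + 1/5)^+2.
  apply: (mulfI hq); rewrite mulrA (mulrC q) pq C; ring.
have q3 : q + 3/5 != 0.
  apply/eqP => E; move: K1; rewrite E mulr0 => H.
  have : (q + 1/5)^+2 == 0 by rewrite -H.
  by rewrite sqrf_eq0 (negbTE hq1).
pose x2 := 1/5 + p - q.
pose x4 := 1/5 + q - p.
have x4E : x4 * (q + 3/5) = 2/5 * (q + 1/5) by rewrite /x4; lra.
have h4 : x4 != 0.
  apply/eqP => E; move: x4E; rewrite E mul0r => H; move/eqP: hq1; apply; lra.
have Hr1 : x2 * p = x4^+2 by rewrite /x2 /x4; lra.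
have h2 : x2 != 0.
  apply/eqP => E; move: Hr1; rewrite E mul0r => H.
  have : x4^+2 == 0 by rewrite -H.
  by rewrite sqrf_eq0 (negbTE h4).
pose x1 := (1-a)*s.
have h1 : x1 != 0 by rewrite /x1 mulf_eq0 negb_or ha1' hs.
have h3 : x3 != 0.
  apply/eqP => E; move: Hx3s; rewrite E mul0r => H.
  have : a^+2 * s^+2 == 0 by rewrite -H.
  by rewrite mulf_eq0 !sqrf_eq0 (negbTE ha0) (negbTE hs).
have x1s : x1 * x1 = (1-a)^+2 * s^+2 by rewrite /x1; ring.
have Lin : x3 + q + x1 = 2/5 by rewrite Hx3 /x1; ring.
have x2d : x2 = 1/5 + p - q by [].
have x1d : x1 = (1-a)*s by [].
have x4d : x4 = 1/5 + q - p by [].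
clearbody x1 x2 x4 p.
pose g2 := x3 * x2 / (a^+2 * x4).
pose g3 := x1 * g2 / (1-a)^+2.
pose g4 := x2 * g3.
pose g5 := x3 * g4 / a^+2.
pose g6 := x4 * g5.
pose g7 := q * g6.
have n2 : g2 != 0 by rewrite /g2; nzt h1 h2 h3 h4 hq hp h1 ha0 ha1'.
have n3 : g3 != 0 by rewrite /g3 /g2; nzt h1 h2 h3 h4 hq hp h1 ha0 ha1'.
have n4 : g4 != 0 by rewrite /g4 /g3 /g2; nzt h1 h2 h3 h4 hq hp h1 ha0 ha1'.
have n5 : g5 != 0 by rewrite /g5 /g4 /g3 /g2; nzt h1 h2 h3 h4 hq hp h1 ha0 ha1'.
have n6 : g6 != 0 by rewrite /g6 /g5 /g4 /g3 /g2; nzt h1 h2 h3 h4 hq hp h1 ha0 ha1'.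
have n7 : g7 != 0 by rewrite /g7 /g6 /g5 /g4 /g3 /g2; nzt h1 h2 h3 h4 hq hp h1 ha0 ha1'.
have E1 : X1 a 1 g2 g3 g4 g5 g6 g7 = x1.
  rewrite /X1 /g3; field; by rewrite ?n2 ?ha1'.
have E2 : X2 a 1 g2 g3 g4 g5 g6 g7 = x2.
  rewrite /X2 /g4; field; by rewrite ?n3.
have E3 : X3 a 1 g2 g3 g4 g5 g6 g7 = x3.
  rewrite /X3 /g5; field; by rewrite ?n4 ?ha0.
have E4 : X4 a 1 g2 g3 g4 g5 g6 g7 = x4.
  rewrite /X4 /g5 /g4 /g2; field; by rewrite ?n3 ?ha0 ?h2 ?h3 ?h4.
have E5 : X5 a 1 g2 g3 g4 g5 g6 g7 = x4.
  rewrite /X5 /g6; field; by rewrite ?n5.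
have E6 : X6 a 1 g2 g3 g4 g5 g6 g7 = p.
  have -> : p = x4^+2 / x2 by rewrite -Hr1; field.
  rewrite /X6 /g6 /g5 /g4 /g2; field; by rewrite ?n3 ?ha0 ?h2 ?h3 ?h4.
have E7 : X7 a 1 g2 g3 g4 g5 g6 g7 = q.
  rewrite /X7 /g7; field; by rewrite ?n6.
have E8 : X8 a 1 g2 g3 g4 g5 g6 g7 = x3.
  have -> : X8 a 1 g2 g3 g4 g5 g6 g7 = a^+2 * q * x4^+2 / (x3 * x2).
    rewrite /X8 /g7 /g6 /g2; field; by rewrite ?n5 ?ha0 ?h2 ?h3 ?h4.
  rewrite -Hr1 (_ : a^+2 * q * (x2 * p) = x3 * x3 * x2); last first.
    by rewrite Hx3s -pq; ring.
  field; by rewrite ?h2 ?h3.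
have E9 : X9 a 1 g2 g3 g4 g5 g6 g7 = x1.
  have -> : X9 a 1 g2 g3 g4 g5 g6 g7 = (1-a)^+2 * q * x4^+2 / (x1 * x2).
    rewrite /X9 /g7 /g6 /g5 /g4 /g3 /g2; field; by rewrite ?n3 ?ha0 ?ha1' ?h1 ?h2 ?h3 ?h4.
  rewrite -Hr1 (_ : (1-a)^+2 * q * (x2 * p) = x1 * x1 * x2); last first.
    by rewrite x1s -pq; ring.
  field; by rewrite ?h1 ?h2.
exists g2, g3, g4, g5, g6, g7; split => //.
clearbody g2 g3 g4 g5 g6 g7.
- rewrite /Eqs; split; [|split; [|split; [|split; [|split; [|split]]]]];
    rewrite ?E1 ?E2 ?E3 ?E4 ?E5 ?E6 ?E7 ?E8 ?E9; clear - x2d x4d Lin; lra.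
- by rewrite E1 x1d.
Qed.

Lemma flipEqs (R : realType) (a g1 g2 g3 g4 g5 g6 g7 : R) :
  g1 != 0 -> g2 != 0 -> g3 != 0 -> g4 != 0 -> g5 != 0 -> g6 != 0 -> g7 != 0 ->
  Eqs a g1 g2 g3 g4 g5 g6 g7 ->
  [/\ Eqs a (-g1) g2 (-g3) g4 (-g5) g6 (-g7),
      X1 a (-g1) g2 (-g3) g4 (-g5) g6 (-g7) = X1 a g1 g2 g3 g4 g5 g6 g7,
      X3 a (-g1) g2 (-g3) g4 (-g5) g6 (-g7) = X3 a g1 g2 g3 g4 g5 g6 g7 &
      X7 a (-g1) g2 (-g3) g4 (-g5) g6 (-g7) = X7 a g1 g2 g3 g4 g5 g6 g7].
Proof.
move=> h1 h2 h3 h4 h5 h6 h7 HE.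
have F1 : X1 a (-g1) g2 (-g3) g4 (-g5) g6 (-g7) = X1 a g1 g2 g3 g4 g5 g6 g7.
  rewrite /X1; field; by rewrite ?h1 ?h2 ?h3 ?h4 ?h5 ?h6 ?h7.
have F2 : X2 a (-g1) g2 (-g3) g4 (-g5) g6 (-g7) = X2 a g1 g2 g3 g4 g5 g6 g7.
  rewrite /X2; field; by rewrite ?h1 ?h2 ?h3 ?h4 ?h5 ?h6 ?h7.
have F3 : X3 a (-g1) g2 (-g3) g4 (-g5) g6 (-g7) = X3 a g1 g2 g3 g4 g5 g6 g7.
  rewrite /X3; field; by rewrite ?h1 ?h2 ?h3 ?h4 ?h5 ?h6 ?h7.
have F4 : X4 a (-g1) g2 (-g3) g4 (-g5) g6 (-g7) = X4 a g1 g2 g3 g4 g5 g6 g7.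
  rewrite /X4; field; by rewrite ?h1 ?h2 ?h3 ?h4 ?h5 ?h6 ?h7.
have F5 : X5 a (-g1) g2 (-g3) g4 (-g5) g6 (-g7) = X5 a g1 g2 g3 g4 g5 g6 g7.
  rewrite /X5; field; by rewrite ?h1 ?h2 ?h3 ?h4 ?h5 ?h6 ?h7.
have F6 : X6 a (-g1) g2 (-g3) g4 (-g5) g6 (-g7) = X6 a g1 g2 g3 g4 g5 g6 g7.
  rewrite /X6; field; by rewrite ?h1 ?h2 ?h3 ?h4 ?h5 ?h6 ?h7.
have F7 : X7 a (-g1) g2 (-g3) g4 (-g5) g6 (-g7) = X7 a g1 g2 g3 g4 g5 g6 g7.
  rewrite /X7; field; by rewrite ?h1 ?h2 ?h3 ?h4 ?h5 ?h6 ?h7.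
have F8 : X8 a (-g1) g2 (-g3) g4 (-g5) g6 (-g7) = X8 a g1 g2 g3 g4 g5 g6 g7.
  rewrite /X8; field; by rewrite ?h1 ?h2 ?h3 ?h4 ?h5 ?h6 ?h7.
have F9 : X9 a (-g1) g2 (-g3) g4 (-g5) g6 (-g7) = X9 a g1 g2 g3 g4 g5 g6 g7.
  rewrite /X9; field; by rewrite ?h1 ?h2 ?h3 ?h4 ?h5 ?h6 ?h7.
split => //.
by rewrite /Eqs F1 F2 F3 F4 F5 F6 F7 F8 F9.
Qed.

Lemma build (R : realType) (a s q x3 : R) (e : bool) :
  a != 0 -> a != 1 -> s != 0 -> q != 0 -> q + 1/5 != 0 ->
  x3 = 2/5 - q - (1-a)*s -> x3 * x3 = a^+2 * s^+2 -> s^+2 * (q + 3/5) = q * (q + 1/5)^+2 ->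
  inS (ga a) (sgfun e (0 < (1-a)*s) (0 < x3) (0 < q)).
Proof.
move=> ha0 ha1 hs hq hq1 Hx3 Hx3s C.
rewrite inS_iff //.
have [g2 [g3 [g4 [g5 [g6 [g7 [[n2 n3 n4 n5 n6] n7 HE E1 [E3 E7]]]]]]]] :=
  build1 ha0 ha1 hs hq hq1 Hx3 Hx3s C.
have n1 : (1 : R) != 0 by rewrite oner_eq0.
case: e.
- have [HE' F1 F3 F7] := flipEqs n1 n2 n3 n4 n5 n6 n7 HE.
  have m1 : (-1 : R) != 0 by rewrite oppr_eq0 oner_eq0.
  have m3 : - g3 != 0 by rewrite oppr_eq0.
  have m5 : - g5 != 0 by rewrite oppr_eq0.
  have m7 : - g7 != 0 by rewrite oppr_eq0.
  exists (-1), g2, (-g3), g4, (-g5), g6, (-g7); split => //.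
  have [-> _] := sig_of_eqs ha0 ha1 m1 n2 m3 n4 m5 n6 m7 HE'.
  by rewrite F1 F3 F7 E1 E3 E7 ltrN10.
- exists 1, g2, g3, g4, g5, g6, g7; split => //.
  have [-> _] := sig_of_eqs ha0 ha1 n1 n2 n3 n4 n5 n6 n7 HE.
  by rewrite E1 E3 E7 ltr10.
Qed.


Lemma ExPlus1 (R : realType) (a : R) (e : bool) : a != 0 -> a != 1 ->
  inS (ga a) (sgfun e (a < 1) (0 < a) true).
Proof.
move=> ha0 ha1.
have H := @build R a (1/5) (1/5) (a/5) e ha0 ha1.
have b1 : (0 < (1-a) * (1/5)) = (a < 1) by apply/idP/idP => ?; lra.
have b2 : (0 < a/5) = (0 < a) by apply/idP/idP => ?; lra.
have b3 : (0 < 1/5 :> R) = true by apply/idP; lra.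
rewrite b1 b2 b3 in H; apply: H.
- by apply: lt0r_neq0; lra.
- by apply: lt0r_neq0; lra.
- by apply: lt0r_neq0; lra.
- lra.
- by field.
- by field.
Qed.

Lemma ExPlus6 (R : realType) (a : R) (e : bool) : a != 0 -> a != 1 ->
  inS (ga a) (sgfun e (a < 1) (0 < a) false).
Proof.
move=> ha0 ha1.
have H := @build R a (6/5) (-4/5) (6*a/5) e ha0 ha1.
have b1 : (0 < (1-a) * (6/5)) = (a < 1) by apply/idP/idP => ?; lra.
have b2 : (0 < 6*a/5) = (0 < a) by apply/idP/idP => ?; lra.
have b3 : (0 < -4/5 :> R) = false by apply/negbTE; rewrite -leNgt; lra.
rewrite b1 b2 b3 in H; apply: H.
- by apply: lt0r_neq0; lra.
- by apply: ltr0_neq0; lra.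
- by apply: ltr0_neq0; lra.
- lra.
- by field.
- by field.
Qed.

Definition Pv (R : realType) (m x : R) : R :=
  (2/5 - x)^+2 * (x + 3/5) - m^+2 * x * (x + 1/5)^+2.

Lemma ExMinus (R : realType) (a q : R) (e : bool) : a != 0 -> a != 1 -> 1 - 2*a != 0 ->
  q != 0 -> q != 2/5 -> q + 1/5 != 0 -> Pv (1 - 2*a) q = 0 ->
  inS (ga a) (sgfun e (0 < (1-a) * ((2/5 - q) / (1 - 2*a))) (0 < -a * ((2/5 - q) / (1 - 2*a))) (0 < q)).
Proof.
move=> ha0 ha1 hm hq hq2 hq1 HP.
set s := (2/5 - q) / (1 - 2*a).
have hs : s != 0.
  rewrite /s mulf_eq0 invr_eq0 negb_or hm andbT subr_eq0 eq_sym; exact: hq2.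
have ms : (1 - 2*a) * s = 2/5 - q by rewrite /s; field.
apply: build => //.
- by rewrite -ms; ring.
- by ring.
- apply: (mulfI (expf_neq0 2 hm)).
  rewrite mulrA -exprMn ms.
  by move: HP; rewrite /Pv => /eqP; rewrite subr_eq0 => /eqP ->; rewrite !mulrA.
Qed.

Lemma Pv_ivt (R : realType) (m lo hi : R) : lo <= hi ->
  (Pv m lo <= 0 <= Pv m hi) \/ (Pv m hi <= 0 <= Pv m lo) ->
  exists2 x, lo <= x <= hi & Pv m x = 0.
Proof.
move=> hlh H.
pose P : {poly R} := ((2/5)%:P - 'X)^+2 * ('X + (3/5)%:P) - (m^+2)%:P * 'X * ('X + (1/5)%:P)^+2.
have PE : forall x, P.[x] = Pv m x by move=> x; rewrite /P /Pv !hornerE.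
case: H => H.
- have [x hx /eqP rx] := @poly_ivt R P lo hi hlh ltac:(by rewrite !PE).
  by exists x => //; rewrite -PE.
- have [x hx /eqP rx] := @poly_ivt R (- P) lo hi hlh ltac:(by rewrite !hornerN !PE !oppr_le0 !oppr_ge0 andbC).
  by exists x => //; rewrite -PE; apply/eqP; rewrite -oppr_eq0 -hornerN rx.
Qed.

Lemma hid (R : realType) (Q : R) :
  (2 - Q) ^+ 2 * (Q + 3) - Bc R * Q * (1 + Q) ^+ 2 =
  (Q + (7 + Num.sqrt 41)/2) ^+ 2 * ((1 - Bc R) * Q + (135 - 21 * Num.sqrt 41) / 2).
Proof.
have [w2 wl wu] := wfacts R.
set w := Num.sqrt 41 in w2 wl wu *.
have E : (2 - Q) ^+ 2 * (Q + 3) - Bc R * Q * (1 + Q) ^+ 2 =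
   (Q + (7 + w)/2) ^+ 2 * ((1 - Bc R) * Q + (135 - 21 * w) / 2)
   + (w ^+ 2 - 41) * (123/64 * Q * w + 21/8 * w + 123/16 * Q ^+ 2 + 1611/64 * Q + 159/8).
  by rewrite /Bc -/w; field.
by rewrite w2 subrr mul0r addr0 in E.
Qed.

Definition q0 (R : realType) : R := - (7 + Num.sqrt 41) / 10.

Lemma Pv_q0 (R : realType) (m : R) :
  Pv m (q0 R) = (Bc R - m^+2) * (5 * q0 R) * (1 + 5 * q0 R)^+2 / 125.
Proof.
have H := hid (5 * q0 R).
have Z : 5 * q0 R + (7 + Num.sqrt 41) / 2 = 0 by rewrite /q0; field.
rewrite Z expr0n /= mul0r in H.
move/eqP: H; rewrite subr_eq0 => /eqP H.
rewrite /Pv.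
have -> : (2/5 - q0 R)^+2 * (q0 R + 3/5) = (2 - 5 * q0 R)^+2 * (5 * q0 R + 3) / 125 by field.
by rewrite H; field.
Qed.

Lemma q0_lt (R : realType) : q0 R < -3/5.
Proof. have [w2 wl wu] := wfacts R; rewrite /q0; lra. Qed.

Lemma root_small (R : realType) (m : R) : m != 0 ->
  exists2 q, 0 < q < 2/5 & Pv m q = 0.
Proof.
move=> hm.
have m2 : 0 < m^+2 by apply: sqr_pos.
have [q /andP[q0 q1] Hq] : exists2 q, 0 <= q <= 2/5 & Pv m q = 0.
  by apply: Pv_ivt; [lra | right; rewrite /Pv; apply/andP; split; nra].
exists q => //; apply/andP; split.
- rewrite lt_def q0 andbT; apply/eqP => E; move: Hq; rewrite E /Pv; lra.
- rewrite lt_def q1 andbT; apply/eqP => E; move: Hq; rewrite -E /Pv; nra.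
Qed.

Lemma root_big (R : realType) (m : R) : m != 0 -> m^+2 < 1 ->
  exists2 q, 2/5 < q & Pv m q = 0.
Proof.
move=> hm m21.
have m2 : 0 < m^+2 by apply: sqr_pos.
set T := 1 / (1 - m^+2).
have HT : (1 - m^+2) * T = 1 by rewrite /T; field; apply/eqP; lra.
have T1 : 1 <= T by rewrite /T ler_pdivlMr; lra.
have PT : 0 <= Pv m T.
  have -> : Pv m T = (2/5 - T)^+2 * (T + 3/5) - (m^+2 * T) * (T + 1/5)^+2 by rewrite /Pv mulrA.
  have -> : m^+2 * T = T - 1 by lra.
  rewrite /Pv; nra.
have [q /andP[q0 q1] Hq] : exists2 q, 2/5 <= q <= T & Pv m q = 0.
  by apply: Pv_ivt; [lra | left; rewrite PT andbT /Pv; nra].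
exists q => //.
rewrite lt_def q0 andbT; apply/eqP => E; move: Hq; rewrite E /Pv; nra.
Qed.

Lemma root_neg (R : realType) (m : R) : m != 0 -> m^+2 <= Bc R ->
  exists2 q, q < -3/5 & Pv m q = 0.
Proof.
move=> hm mB.
have m2 : 0 < m^+2 by apply: sqr_pos.
have ql := q0_lt R.
have Pq0 : Pv m (q0 R) <= 0.
  rewrite Pv_q0; apply: mulr_le0_ge0; last by rewrite invr_ge0; lra.
  apply: mulr_le0_ge0; last exact: sqr_ge0.
  apply: mulr_ge0_le0; lra.
have [q /andP[q1 q2] Hq] : exists2 q, q0 R <= q <= -3/5 & Pv m q = 0.
  by apply: Pv_ivt; [lra | left; rewrite Pq0 /Pv; nra].
exists q => //.
rewrite lt_def q2 andbT; apply/eqP => E; move: Hq; rewrite -E /Pv; nra.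
Qed.

Ltac bsolve2 := solve [ apply/idP; nra | apply/negbTE; rewrite -leNgt; nra | apply/idP/idP => ?; nra ].

Lemma neq_of_lt (R : realType) (x y : R) : x < y -> x != y.
Proof. by move=> h; rewrite lt_eqF. Qed.

Lemma neq_of_gt (R : realType) (x y : R) : y < x -> x != y.
Proof. by move=> h; rewrite gt_eqF. Qed.

Lemma ExM1 (R : realType) (a : R) (e : bool) : a != 0 -> a < 2^-1 ->
  inS (ga a) (sgfun e true (a < 0) true).
Proof.
move=> ha0 ha.
have ha1 : a != 1 by apply: neq_of_lt; lra.
have hm : 1 - 2*a != 0 by apply: neq_of_gt; lra.
have [q /andP[q1 q2] Hq] := root_small hm.
have H := ExMinus e ha0 ha1 hm (neq_of_gt q1) (neq_of_lt q2) (neq_of_gt (_ : 0 < q + 1/5)) Hq.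
set s := (2/5 - q) / (1 - 2*a) in H.
have sp : 0 < s by rewrite /s divr_gt0 //; lra.
move: H; rewrite (_ : (0 < (1-a) * s) = true); last by bsolve2.
rewrite (_ : (0 < -a * s) = (a < 0)); last by bsolve2.
by rewrite q1; apply; lra.
Qed.

Lemma ExGen (R : realType) (a q : R) (e b1 b2 b3 : bool) : a != 0 -> a != 1 -> 1 - 2*a != 0 ->
  q != 0 -> q != 2/5 -> q + 1/5 != 0 -> Pv (1 - 2*a) q = 0 ->
  (forall s, (1 - 2*a) * s = 2/5 - q ->
     [/\ (0 < (1-a) * s) = b1, (0 < -a * s) = b2 & (0 < q) = b3]) ->
  inS (ga a) (sgfun e b1 b2 b3).
Proof.
move=> ha0 ha1 hm hq hq2 hq1 HP Hb.
have H := ExMinus e ha0 ha1 hm hq hq2 hq1 HP.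
have [<- <- <-] := Hb ((2/5 - q) / (1 - 2*a)) ltac:(by field).
exact: H.
Qed.

Lemma ExM2 (R : realType) (a : R) (e : bool) : a != 1 -> 2^-1 < a ->
  inS (ga a) (sgfun e (1 < a) true true).
Proof.
move=> ha1 ha.
have ha0 : a != 0 by apply: neq_of_gt; lra.
have hm : 1 - 2*a != 0 by apply: neq_of_lt; lra.
have [q /andP[q1 q2] Hq] := root_small hm.
apply: (ExGen e ha0 ha1 hm (neq_of_gt q1) (neq_of_lt q2) _ Hq).
  by apply: neq_of_gt; lra.
move=> s ms; have sn : s < 0 by nra.
by split; bsolve2.
Qed.

Lemma ExM3 (R : realType) (a : R) (e b : bool) : a = 2^-1 ->
  inS (ga a) (sgfun e b (~~ b) true).
Proof.
move=> ha.
have ha0 : a != 0 by apply: neq_of_gt; lra.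
have ha1 : a != 1 by apply: neq_of_lt; lra.
pose r := Num.sqrt (18/125 : R).
have r2 : r^+2 = 18/125 by rewrite /r sqr_sqrtr //; lra.
have rp : 0 < r by rewrite /r sqrtr_gt0; lra.
have key : forall s, s^+2 = 18/125 -> inS (ga a) (sgfun e (0 < (1-a)*s) (0 < - s / 2) true).
  move=> s s2.
  have hs : s != 0 by apply/eqP => E; move: s2; rewrite E expr0n /=; lra.
  have H := @build R a s (2/5) (- s / 2) e ha0 ha1 hs.
  rewrite (_ : (0 < 2/5 :> R) = true) in H; last by apply/idP; lra.
  apply: H.
  - by apply: neq_of_gt; lra.
  - by apply: neq_of_gt; lra.
  - by rewrite ha; field.
  - by rewrite ha; field.
  - by rewrite s2; field.
case: b.
- have H := key r r2.
  have e1 : (0 < (1-a) * r) = true by apply/idP; rewrite ha; nra.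
  have e2 : (0 < - r / 2) = false by apply/negbTE; rewrite -leNgt; lra.
  rewrite e1 e2 in H; exact: H.
- have H := key (- r) ltac:(by rewrite sqrrN).
  have e1 : (0 < (1-a) * - r) = false by apply/negbTE; rewrite -leNgt ha; nra.
  have e2 : (0 < - - r / 2) = true by apply/idP; lra.
  rewrite e1 e2 in H; exact: H.
Qed.

Lemma ExM4 (R : realType) (a : R) (e : bool) : 2^-1 < a < 1 ->
  inS (ga a) (sgfun e true false true).
Proof.
move=> /andP[ha ha'].
have ha0 : a != 0 by apply: neq_of_gt; lra.
have ha1 : a != 1 by apply: neq_of_lt; lra.
have hm : 1 - 2*a != 0 by apply: neq_of_lt; lra.
have m21 : (1 - 2*a)^+2 < 1 by nra.
have [q q1 Hq] := root_big hm m21.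
apply: (ExGen e ha0 ha1 hm (neq_of_gt (_ : 0 < q)) (neq_of_gt q1) (neq_of_gt (_ : 0 < q + 1/5)) Hq).
- lra.
- lra.
- move=> s ms; have sp : 0 < s by nra.
  by split; bsolve2.
Qed.

Lemma ExM5 (R : realType) (a : R) (e : bool) : 0 < a < 2^-1 ->
  inS (ga a) (sgfun e false true true).
Proof.
move=> /andP[ha ha'].
have ha0 : a != 0 by apply: neq_of_gt; lra.
have ha1 : a != 1 by apply: neq_of_lt; lra.
have hm : 1 - 2*a != 0 by apply: neq_of_gt; lra.
have m21 : (1 - 2*a)^+2 < 1 by nra.
have [q q1 Hq] := root_big hm m21.
apply: (ExGen e ha0 ha1 hm (neq_of_gt (_ : 0 < q)) (neq_of_gt q1) (neq_of_gt (_ : 0 < q + 1/5)) Hq).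
- lra.
- lra.
- move=> s ms; have sn : s < 0 by nra.
  by split; bsolve2.
Qed.

Lemma ExM6 (R : realType) (a : R) (e : bool) : a != 0 -> 2^-1 - beta R <= a < 2^-1 ->
  inS (ga a) (sgfun e true (a < 0) false).
Proof.
move=> ha0 /andP[ha ha'].
have [b0 b4] := betaE R.
have ha1 : a != 1 by apply: neq_of_lt; lra.
have hm : 1 - 2*a != 0 by apply: neq_of_gt; lra.
have mB : (1 - 2*a)^+2 <= Bc R by rewrite -b4; nra.
have [q q1 Hq] := root_neg hm mB.
apply: (ExGen e ha0 ha1 hm (neq_of_lt (_ : q < 0)) (neq_of_lt (_ : q < 2/5)) (neq_of_lt (_ : q + 1/5 < 0)) Hq).
- lra.
- lra.
- lra.
- move=> s ms; have sp : 0 < s by nra.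
  by split; bsolve2.
Qed.

Lemma ExM7 (R : realType) (a : R) (e : bool) : a != 1 -> 2^-1 < a <= 2^-1 + beta R ->
  inS (ga a) (sgfun e (1 < a) true false).
Proof.
move=> ha1 /andP[ha ha'].
have [b0 b4] := betaE R.
have ha0 : a != 0 by apply: neq_of_gt; lra.
have hm : 1 - 2*a != 0 by apply: neq_of_lt; lra.
have mB : (1 - 2*a)^+2 <= Bc R by rewrite -b4; nra.
have [q q1 Hq] := root_neg hm mB.
apply: (ExGen e ha0 ha1 hm (neq_of_lt (_ : q < 0)) (neq_of_lt (_ : q < 2/5)) (neq_of_lt (_ : q + 1/5 < 0)) Hq).
- lra.
- lra.
- lra.
- move=> s ms; have sn : s < 0 by nra.
  by split; bsolve2.
Qed.


Lemma fwd_main (R : realType) (a : R) (sigma : {set 'I_7}) : a != 0 -> a != 1 ->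
  inS (ga a) sigma -> exists e A D G, sigma = sgfun e A D G /\ scen a A D G.
Proof.
move=> ha0 ha1; rewrite inS_iff //.
case=> g1 [g2 [g3 [g4 [g5 [g6 [g7 [[h1 h2 h3 h4 h5] h6 h7 HE ->]]]]]]].
have [-> Hs] := sig_of_eqs ha0 ha1 h1 h2 h3 h4 h5 h6 h7 HE.
by do 4 eexists; split; [reflexivity | exact: Hs].
Qed.

Lemma beta_gt (R : realType) : 2^-1 < beta R.
Proof.
have [b0 b4] := betaE R; have [Bl Bu] := andP (Bc_bounds R).
nra.
Qed.

Ltac memtac := repeat match goal with
  | |- is_true (?x \in ?x :: _) => apply: mem_head
  | |- is_true (_ \in _ :: _) => rewrite in_cons; apply/orP; right
  end.

Ltac usetac := match goal with H : inS _ ?S |- inS _ ?S => exact: H end.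

Ltac killtac := solve [ exfalso; lra | exfalso; case/andP: (_ : is_true (_ && _)) => *; lra ].


Lemma range1 (R : realType) (a : R) : a != 0 -> a != 1 -> a < 2^-1 - beta R ->
  forall sigma, inS (ga a) sigma <->
    sigma \in [:: sg [::]%N; sg [:: 1;2;4;5;7]%N; sg [:: 1;3;4;5]%N;
                  sg [:: 1;3;5;7]%N; sg [:: 2;3;4]%N; sg [:: 4;7]%N].
Proof.
move=> ha0 ha1 Hr sigma.
have bg := beta_gt R.
have f1 : (a < 1) = true by apply/idP; lra.
have f2 : (0 < a) = false by apply/negbTE; rewrite -leNgt; lra.
have f3 : (a < 0) = true by apply/idP; lra.
have f4 : (1 < a) = false by apply/negbTE; rewrite -leNgt; lra.
split.
- move=> /(fwd_main ha0 ha1) [e [A [D [G [-> Hs]]]]].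
  case: Hs => [H|[H|[[Ha H]|[[Ha H]|[[Ha [H|H]]|[[Ha H]|[[Ha H]|[[Ha H]|[Ha H]]]]]]]]];
  try (exfalso; try case/andP: Ha => *; lra);
  case: H => -> -> ->; rewrite ?f1 ?f2 ?f3 ?f4; case: e; rewrite /sgfun /=; memtac.
- have E1 := ExPlus1 true ha0 ha1; have E2 := ExPlus1 false ha0 ha1.
  have E3 := ExPlus6 true ha0 ha1; have E4 := ExPlus6 false ha0 ha1.
  have ha' : a < 2^-1 by lra.
  have E5 := ExM1 true ha0 ha'; have E6 := ExM1 false ha0 ha'.
    rewrite ?f1 ?f2 ?f3 ?f4 /sgfun /= in E1 E2 E3 E4 E5 E6.
  move=> Hm; repeat case/predU1P: Hm => [->|Hm]; try usetac.
  by [].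
Qed.

Lemma range2 (R : realType) (a : R) : a != 0 -> a != 1 -> 2^-1 - beta R <= a < 0 ->
  forall sigma, inS (ga a) sigma <->
    sigma \in [:: sg [::]%N; sg [:: 1;2;4;5;7]%N; sg [:: 1;2;5]%N; sg [:: 1;3;4;5]%N;
                     sg [:: 1;3;5;7]%N; sg [:: 2;3;4]%N; sg [:: 2;3;7]%N; sg [:: 4;7]%N].
Proof.
move=> ha0 ha1 /andP[Hr Hr'] sigma.
have bg := beta_gt R.
have f1 : (a < 1) = true by apply/idP; lra.
have f2 : (0 < a) = false by apply/negbTE; rewrite -leNgt; lra.
have f3 : (a < 0) = true by apply/idP; lra.
have f4 : (1 < a) = false by apply/negbTE; rewrite -leNgt; lra.
split.
- move=> /(fwd_main ha0 ha1) [e [A [D [G [-> Hs]]]]].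
  case: Hs => [H|[H|[[Ha H]|[[Ha H]|[[Ha [H|H]]|[[Ha H]|[[Ha H]|[[Ha H]|[Ha H]]]]]]]]];
  try (exfalso; try case/andP: Ha => *; lra);
  case: H => -> -> ->; rewrite ?f1 ?f2 ?f3 ?f4; case: e; rewrite /sgfun /=; memtac.
- have E1 := ExPlus1 true ha0 ha1; have E2 := ExPlus1 false ha0 ha1.
  have E3 := ExPlus6 true ha0 ha1; have E4 := ExPlus6 false ha0 ha1.
  have ha' : a < 2^-1 by lra.
  have hb : 2^-1 - beta R <= a < 2^-1 by apply/andP; split; lra.
  have E5 := ExM1 true ha0 ha'; have E6 := ExM1 false ha0 ha'.
  have E7 := ExM6 true ha0 hb; have E8 := ExM6 false ha0 hb.
    rewrite ?f1 ?f2 ?f3 ?f4 /sgfun /= in E1 E2 E3 E4 E5 E6 E7 E8.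
  move=> Hm; repeat case/predU1P: Hm => [->|Hm]; try usetac.
  by [].
Qed.

Lemma range3 (R : realType) (a : R) : a != 0 -> a != 1 -> 0 < a < 2^-1 ->
  forall sigma, inS (ga a) sigma <->
    sigma \in [:: sg [::]%N; sg [:: 1;2;4;5;7]%N; sg [:: 1;2;5]%N; sg [:: 1;4;6]%N;
                     sg [:: 1;3;4;5]%N; sg [:: 1;3;5;7]%N; sg [:: 2;3;4]%N; sg [:: 2;3;7]%N;
                     sg [:: 3;4;5;6;7]%N; sg [:: 4;7]%N].
Proof.
move=> ha0 ha1 /andP[Hr Hr'] sigma.
have bg := beta_gt R.
have f1 : (a < 1) = true by apply/idP; lra.
have f2 : (0 < a) = true by apply/idP; lra.
have f3 : (a < 0) = false by apply/negbTE; rewrite -leNgt; lra.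
have f4 : (1 < a) = false by apply/negbTE; rewrite -leNgt; lra.
split.
- move=> /(fwd_main ha0 ha1) [e [A [D [G [-> Hs]]]]].
  case: Hs => [H|[H|[[Ha H]|[[Ha H]|[[Ha [H|H]]|[[Ha H]|[[Ha H]|[[Ha H]|[Ha H]]]]]]]]];
  try (exfalso; try case/andP: Ha => *; lra);
  case: H => -> -> ->; rewrite ?f1 ?f2 ?f3 ?f4; case: e; rewrite /sgfun /=; memtac.
- have E1 := ExPlus1 true ha0 ha1; have E2 := ExPlus1 false ha0 ha1.
  have E3 := ExPlus6 true ha0 ha1; have E4 := ExPlus6 false ha0 ha1.
  have ha' : a < 2^-1 by lra.
  have hb : 2^-1 - beta R <= a < 2^-1 by apply/andP; split; lra.
  have hc : 0 < a < 2^-1 by apply/andP; split; lra.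
  have E5 := ExM1 true ha0 ha'; have E6 := ExM1 false ha0 ha'.
  have E7 := ExM6 true ha0 hb; have E8 := ExM6 false ha0 hb.
  have E9 := ExM5 true hc; have E10 := ExM5 false hc.
    rewrite ?f1 ?f2 ?f3 ?f4 /sgfun /= in E1 E2 E3 E4 E5 E6 E7 E8 E9 E10.
  move=> Hm; repeat case/predU1P: Hm => [->|Hm]; try usetac.
  by [].
Qed.

Lemma range4 (R : realType) (a : R) : a != 0 -> a != 1 -> a = 2^-1 ->
  forall sigma, inS (ga a) sigma <->
    sigma \in [:: sg [::]%N; sg [:: 1;2;4;5;7]%N; sg [:: 1;2;5]%N; sg [:: 1;3;5;7]%N;
                     sg [:: 1;4;6]%N; sg [:: 2;3;4]%N; sg [:: 2;3;7]%N; sg [:: 3;4;5;6;7]%N].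
Proof.
move=> ha0 ha1 Hr sigma.
have bg := beta_gt R.
have f1 : (a < 1) = true by apply/idP; lra.
have f2 : (0 < a) = true by apply/idP; lra.
have f3 : (a < 0) = false by apply/negbTE; rewrite -leNgt; lra.
have f4 : (1 < a) = false by apply/negbTE; rewrite -leNgt; lra.
split.
- move=> /(fwd_main ha0 ha1) [e [A [D [G [-> Hs]]]]].
  case: Hs => [H|[H|[[Ha H]|[[Ha H]|[[Ha [H|H]]|[[Ha H]|[[Ha H]|[[Ha H]|[Ha H]]]]]]]]];
  try (exfalso; try case/andP: Ha => *; lra);
  case: H => -> -> ->; rewrite ?f1 ?f2 ?f3 ?f4; case: e; rewrite /sgfun /=; memtac.
- have E1 := ExPlus1 true ha0 ha1; have E2 := ExPlus1 false ha0 ha1.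
  have E3 := ExPlus6 true ha0 ha1; have E4 := ExPlus6 false ha0 ha1.
  have E5 := ExM3 true true Hr; have E6 := ExM3 false true Hr.
  have E7 := ExM3 true false Hr; have E8 := ExM3 false false Hr.
    rewrite ?f1 ?f2 ?f3 ?f4 /sgfun /= in E1 E2 E3 E4 E5 E6 E7 E8.
  move=> Hm; repeat case/predU1P: Hm => [->|Hm]; try usetac.
  by [].
Qed.

Lemma range5 (R : realType) (a : R) : a != 0 -> a != 1 -> 2^-1 < a < 1 ->
  forall sigma, inS (ga a) sigma <->
    sigma \in [:: sg [::]%N; sg [:: 1;2;3;4;6;7]%N; sg [:: 1;2;4;5;7]%N; sg [:: 1;2;5]%N;
                     sg [:: 1;3;5;7]%N; sg [:: 1;4;6]%N; sg [:: 2;3;4]%N; sg [:: 2;3;7]%N;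
                     sg [:: 2;4;5;6]%N; sg [:: 3;4;5;6;7]%N].
Proof.
move=> ha0 ha1 /andP[Hr Hr'] sigma.
have bg := beta_gt R.
have f1 : (a < 1) = true by apply/idP; lra.
have f2 : (0 < a) = true by apply/idP; lra.
have f3 : (a < 0) = false by apply/negbTE; rewrite -leNgt; lra.
have f4 : (1 < a) = false by apply/negbTE; rewrite -leNgt; lra.
split.
- move=> /(fwd_main ha0 ha1) [e [A [D [G [-> Hs]]]]].
  case: Hs => [H|[H|[[Ha H]|[[Ha H]|[[Ha [H|H]]|[[Ha H]|[[Ha H]|[[Ha H]|[Ha H]]]]]]]]];
  try (exfalso; try case/andP: Ha => *; lra);
  case: H => -> -> ->; rewrite ?f1 ?f2 ?f3 ?f4; case: e; rewrite /sgfun /=; memtac.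
- have E1 := ExPlus1 true ha0 ha1; have E2 := ExPlus1 false ha0 ha1.
  have E3 := ExPlus6 true ha0 ha1; have E4 := ExPlus6 false ha0 ha1.
  have ha' : 2^-1 < a by lra.
  have hb : 2^-1 < a <= 2^-1 + beta R by apply/andP; split; lra.
  have hc : 2^-1 < a < 1 by apply/andP; split; lra.
  have E5 := ExM2 true ha1 ha'; have E6 := ExM2 false ha1 ha'.
  have E7 := ExM7 true ha1 hb; have E8 := ExM7 false ha1 hb.
  have E9 := ExM4 true hc; have E10 := ExM4 false hc.
    rewrite ?f1 ?f2 ?f3 ?f4 /sgfun /= in E1 E2 E3 E4 E5 E6 E7 E8 E9 E10.
  move=> Hm; repeat case/predU1P: Hm => [->|Hm]; try usetac.
  by [].
Qed.

Lemma range6 (R : realType) (a : R) : a != 0 -> a != 1 -> 1 < a <= 2^-1 + beta R ->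
  forall sigma, inS (ga a) sigma <->
    sigma \in [:: sg [::]%N; sg [:: 1;2;3;4;6;7]%N; sg [:: 1;2;5]%N; sg [:: 1;3;5;7]%N;
                     sg [:: 1;4;6]%N; sg [:: 2;3;7]%N; sg [:: 2;4;5;6]%N; sg [:: 3;4;5;6;7]%N].
Proof.
move=> ha0 ha1 /andP[Hr Hr'] sigma.
have bg := beta_gt R.
have f1 : (a < 1) = false by apply/negbTE; rewrite -leNgt; lra.
have f2 : (0 < a) = true by apply/idP; lra.
have f3 : (a < 0) = false by apply/negbTE; rewrite -leNgt; lra.
have f4 : (1 < a) = true by apply/idP; lra.
split.
- move=> /(fwd_main ha0 ha1) [e [A [D [G [-> Hs]]]]].
  case: Hs => [H|[H|[[Ha H]|[[Ha H]|[[Ha [H|H]]|[[Ha H]|[[Ha H]|[[Ha H]|[Ha H]]]]]]]]];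
  try (exfalso; try case/andP: Ha => *; lra);
  case: H => -> -> ->; rewrite ?f1 ?f2 ?f3 ?f4; case: e; rewrite /sgfun /=; memtac.
- have E1 := ExPlus1 true ha0 ha1; have E2 := ExPlus1 false ha0 ha1.
  have E3 := ExPlus6 true ha0 ha1; have E4 := ExPlus6 false ha0 ha1.
  have ha' : 2^-1 < a by lra.
  have hb : 2^-1 < a <= 2^-1 + beta R by apply/andP; split; lra.
  have E5 := ExM2 true ha1 ha'; have E6 := ExM2 false ha1 ha'.
  have E7 := ExM7 true ha1 hb; have E8 := ExM7 false ha1 hb.
    rewrite ?f1 ?f2 ?f3 ?f4 /sgfun /= in E1 E2 E3 E4 E5 E6 E7 E8.
  move=> Hm; repeat case/predU1P: Hm => [->|Hm]; try usetac.
  by [].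
Qed.

Lemma range7 (R : realType) (a : R) : a != 0 -> a != 1 -> 2^-1 + beta R < a ->
  forall sigma, inS (ga a) sigma <->
    sigma \in [:: sg [::]%N; sg [:: 1;2;3;4;6;7]%N; sg [:: 1;3;5;7]%N; sg [:: 1;4;6]%N;
                     sg [:: 2;4;5;6]%N; sg [:: 3;4;5;6;7]%N].
Proof.
move=> ha0 ha1 Hr sigma.
have bg := beta_gt R.
have f1 : (a < 1) = false by apply/negbTE; rewrite -leNgt; lra.
have f2 : (0 < a) = true by apply/idP; lra.
have f3 : (a < 0) = false by apply/negbTE; rewrite -leNgt; lra.
have f4 : (1 < a) = true by apply/idP; lra.
split.
- move=> /(fwd_main ha0 ha1) [e [A [D [G [-> Hs]]]]].
  case: Hs => [H|[H|[[Ha H]|[[Ha H]|[[Ha [H|H]]|[[Ha H]|[[Ha H]|[[Ha H]|[Ha H]]]]]]]]];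
  try (exfalso; try case/andP: Ha => *; lra);
  case: H => -> -> ->; rewrite ?f1 ?f2 ?f3 ?f4; case: e; rewrite /sgfun /=; memtac.
- have E1 := ExPlus1 true ha0 ha1; have E2 := ExPlus1 false ha0 ha1.
  have E3 := ExPlus6 true ha0 ha1; have E4 := ExPlus6 false ha0 ha1.
  have ha' : 2^-1 < a by lra.
  have E5 := ExM2 true ha1 ha'; have E6 := ExM2 false ha1 ha'.
    rewrite ?f1 ?f2 ?f3 ?f4 /sgfun /= in E1 E2 E3 E4 E5 E6.
  move=> Hm; repeat case/predU1P: Hm => [->|Hm]; try usetac.
  by [].
Qed.

Theorem lemma2p4 (R : realType) (a : R) (ha0 : a != 0) (ha1 : a != 1) :
  (a < 2^-1 - beta R ->
     forall sigma, inS (ga a) sigma <->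
       sigma \in [:: sg [::]%N; sg [:: 1;2;4;5;7]%N; sg [:: 1;3;4;5]%N;
                     sg [:: 1;3;5;7]%N; sg [:: 2;3;4]%N; sg [:: 4;7]%N]) /\
  (2^-1 - beta R <= a < 0 ->
     forall sigma, inS (ga a) sigma <->
       sigma \in [:: sg [::]%N; sg [:: 1;2;4;5;7]%N; sg [:: 1;2;5]%N; sg [:: 1;3;4;5]%N;
                     sg [:: 1;3;5;7]%N; sg [:: 2;3;4]%N; sg [:: 2;3;7]%N; sg [:: 4;7]%N]) /\
  (0 < a < 2^-1 ->
     forall sigma, inS (ga a) sigma <->
       sigma \in [:: sg [::]%N; sg [:: 1;2;4;5;7]%N; sg [:: 1;2;5]%N; sg [:: 1;4;6]%N;
                     sg [:: 1;3;4;5]%N; sg [:: 1;3;5;7]%N; sg [:: 2;3;4]%N; sg [:: 2;3;7]%N;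
                     sg [:: 3;4;5;6;7]%N; sg [:: 4;7]%N]) /\
  (a = 2^-1 ->
     forall sigma, inS (ga a) sigma <->
       sigma \in [:: sg [::]%N; sg [:: 1;2;4;5;7]%N; sg [:: 1;2;5]%N; sg [:: 1;3;5;7]%N;
                     sg [:: 1;4;6]%N; sg [:: 2;3;4]%N; sg [:: 2;3;7]%N; sg [:: 3;4;5;6;7]%N]) /\
  (2^-1 < a < 1 ->
     forall sigma, inS (ga a) sigma <->
       sigma \in [:: sg [::]%N; sg [:: 1;2;3;4;6;7]%N; sg [:: 1;2;4;5;7]%N; sg [:: 1;2;5]%N;
                     sg [:: 1;3;5;7]%N; sg [:: 1;4;6]%N; sg [:: 2;3;4]%N; sg [:: 2;3;7]%N;
                     sg [:: 2;4;5;6]%N; sg [:: 3;4;5;6;7]%N]) /\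
  (1 < a <= 2^-1 + beta R ->
     forall sigma, inS (ga a) sigma <->
       sigma \in [:: sg [::]%N; sg [:: 1;2;3;4;6;7]%N; sg [:: 1;2;5]%N; sg [:: 1;3;5;7]%N;
                     sg [:: 1;4;6]%N; sg [:: 2;3;7]%N; sg [:: 2;4;5;6]%N; sg [:: 3;4;5;6;7]%N]) /\
  (2^-1 + beta R < a ->
     forall sigma, inS (ga a) sigma <->
       sigma \in [:: sg [::]%N; sg [:: 1;2;3;4;6;7]%N; sg [:: 1;3;5;7]%N; sg [:: 1;4;6]%N;
                     sg [:: 2;4;5;6]%N; sg [:: 3;4;5;6;7]%N]).

Proof.
split; first exact: range1.
split; first exact: range2.
split; first exact: range3.
split; first exact: range4.
split; first exact: range5.
split; first exact: range6.
exact: range7.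
Qed.
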